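(* Let $R$ be an $F$-finite $F$-pure ring of prime characteristic $p$, let $\{\mathfrak q_i\}_i$ be a family of ideals of $R$, $J=\bigcap_i\mathfrak q_i$, and $\mathfrak a$ an ideal with $\mathfrak a\subseteq\sqrt J$. Then $\operatorname{ct}_J(\mathfrak a)=\sup_i\operatorname{ct}_{\mathfrak q_i}(\mathfrak a)$.
   Context: $J_e=\{f\in R\mid \varphi(f^{1/p^e})\in J \text{ for all }\varphi\in\operatorname{Hom}_R(R^{1/p^e},R)\}$; for $\mathfrak a\subseteq\sqrt J$, $b^J_{\mathfrak a}(p^e)=\max\{t\in\mathbb N\mid\mathfrak a^t\not\subseteq J_e\}$ and the Cartier threshold is $\operatorname{ct}_J(\mathfrak a)=\lim_{e\to\infty}b^J_{\mathfrak a}(p^e)/p^e$ (this limit exists). *)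

(* Defs.v *)
From HB Require Import structures.
From mathcomp Require Import all_boot all_order all_algebra.
From Stdlib Require Import Reals ClassicalEpsilon.
Set Implicit Arguments. Unset Strict Implicit. Unset Printing Implicit Defensive.
Import GRing.Theory.

Section Defs.
Variable Rg : comNzRingType.
Local Open Scope ring_scope.

Definition ideal (I : Rg -> Prop) : Prop :=
  [/\ I 0, (forall x y, I x -> I y -> I (x + y)) & (forall r x, I x -> I (r * x))].

Definition incl (I K : Rg -> Prop) : Prop := forall x, I x -> K x.

Definition bigcap (T : Type) (q : T -> Rg -> Prop) : Rg -> Prop :=
  fun x => forall i, q i x.

Definition radical (I : Rg -> Prop) : Rg -> Prop :=
  fun x => exists n : nat, I (x ^+ n).

(* a^t : the ideal generated by all products of t elements of a. *)
Definition ideal_pow (a : Rg -> Prop) (t : nat) : Rg -> Prop :=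
  fun x => forall K, ideal K ->
    (forall s : seq Rg, size s = t -> (forall y, y \in s -> a y) -> K (\prod_(y <- s) y)) ->
    K x.

Definition gen_by (s : seq Rg) : Rg -> Prop :=
  fun x => exists c : seq Rg, size c = size s /\ x = \sum_(i < size s) c`_i * s`_i.

Definition noetherian : Prop :=
  forall I, ideal I -> exists s : seq Rg, forall x, I x <-> gen_by s x.

(* F-finite: F_* R is a finitely generated R-module, i.e. there are s_1..s_n
   with every x = sum r_i^p s_i. *)
Definition Ffinite (p : nat) : Prop :=
  exists s : seq Rg, forall x : Rg, exists c : seq Rg,
    size c = size s /\ x = \sum_(i < size s) (c`_i ^+ p) * s`_i.

(* F-pure: the Frobenius R -> F_* R is a pure monomorphism of R-modules
   (purity in the sense of Cohn: every finite system of R-linear equations with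
   constants in the image of R that is solvable in F_* R is solvable in the image).
   In F_* R, the action is r . y = r^p y and the image of b is b^p. *)
Definition Fpure (p : nat) : Prop :=
  injective (fun x : Rg => x ^+ p) /\
  forall (m n : nat) (A : 'M[Rg]_(m, n)) (b : 'cV[Rg]_m),
    (exists y : 'cV[Rg]_n,
        map_mx (fun r => r ^+ p) A *m y = map_mx (fun r => r ^+ p) b) ->
    (exists x : 'cV[Rg]_n,
        map_mx (fun r => r ^+ p) A *m map_mx (fun r => r ^+ p) x
        = map_mx (fun r => r ^+ p) b).

(* Elements of Hom_R(R^{1/p^e}, R), via the identification R^{1/p^e} = F^e_* R:
   additive maps phi with phi (r^{p^e} x) = r phi x.  phi(f^{1/p^e}) is phi f. *)
Definition pe_linear (p e : nat) (phi : Rg -> Rg) : Prop :=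
  (forall x y, phi (x + y) = phi x + phi y) /\
  (forall r x, phi (r ^+ (expn p e) * x) = r * phi x).

Definition Je (p e : nat) (J : Rg -> Prop) : Rg -> Prop :=
  fun f => forall phi, pe_linear p e phi -> J (phi f).

Definition is_bmax (p e : nat) (J a : Rg -> Prop) (t : nat) : Prop :=
  ~ incl (ideal_pow a t) (Je p e J) /\
  (forall t', ~ incl (ideal_pow a t') (Je p e J) -> leq t' t).

(* b^J_a(p^e); convention: 0 if the maximum does not exist. *)
Definition bnum (p e : nat) (J a : Rg -> Prop) : nat :=
  epsilon (inhabits 0%N)
    (fun t => is_bmax p e J a t \/ (~ (exists m, is_bmax p e J a m) /\ t = 0%N)).

End Defs.

Definition ct (Rg : comNzRingType) (p : nat) (J a : Rg -> Prop) : R :=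
  epsilon (inhabits 0%R)
    (fun L => Un_cv (fun e => (INR (bnum p e J a) / INR (expn p e))%R) L).

(* Main.v *)
Require Import Defs.
From HB Require Import structures.
From mathcomp Require Import all_boot all_order all_algebra.
From Stdlib Require Import Reals.
Import GRing.Theory.
From Stdlib Require Import Lra Classical ClassicalEpsilon.
From mathcomp Require Import zify ring.

Section RealPart.
Local Open Scope R_scope.

Lemma INR_muln (m n : nat) : INR (muln m n) = INR m * INR n.
Proof. by rewrite -mult_INR. Qed.

Lemma INR_leq (m n : nat) : leq m n -> INR m <= INR n.
Proof. by move/leP; apply: le_INR. Qed.

Lemma seq_props (b : nat -> nat) (p C : nat) : leq 1 p ->
  (forall e, leq (muln p (b e)) (b e.+1)) -> (forall e, leq (b e) (muln C (expn p e))) ->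
  Un_growing (fun e => INR (b e) / INR (expn p e)) /\
  has_ub (fun e => INR (b e) / INR (expn p e)) /\
  (forall e, INR (b e) / INR (expn p e) <= INR C).
Proof.
move=> Hp Hm Hb.
have Hpos : forall e, 0 < INR (expn p e).
  move=> e; apply: lt_0_INR; apply/ltP; by rewrite expn_gt0 Hp.
have HpR : 1 <= INR p by have := INR_leq _ _ Hp; rewrite /=.
have Hub : forall e, INR (b e) / INR (expn p e) <= INR C.
  move=> e; have := INR_leq _ _ (Hb e); rewrite INR_muln => H.
  have := Hpos e => H0.
  apply (Rmult_le_reg_r (INR (expn p e))) => //.
  unfold Rdiv; rewrite Rmult_assoc Rinv_l; lra.
split; last split => //.
- move=> e; have := INR_leq _ _ (Hm e); rewrite INR_muln => H.
  rewrite expnSr INR_muln.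
  have := Hpos e => H0.
  unfold Rdiv; rewrite Rinv_mult.
  apply (Rmult_le_reg_r (INR (expn p e) * INR p)); first nra.
  have Hp0 : INR p <> 0 by lra.
  have Hq0 : INR (expn p e) <> 0 by lra.
  field_simplify; [|lra|lra].
  nra.
- by exists (INR C) => x [e ->]; apply: Hub.
Qed.
End RealPart.

Set Implicit Arguments. Unset Strict Implicit. Unset Printing Implicit Defensive.

Section Alg.
Variable Rg : comNzRingType.
Local Open Scope ring_scope.
Implicit Types (a J : Rg -> Prop).

Lemma ideal_pow_ideal a t : ideal (ideal_pow a t).
Proof.
split.
- by move=> K [K0 _ _] _.
- move=> x y Hx Hy K HK Hg; have [_ KD _] := HK; apply: KD; [exact: Hx|exact: Hy].
- move=> r x Hx K HK Hg; have [_ _ KM] := HK; apply: KM; exact: Hx.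
Qed.

Lemma ideal_pow_gen a (s : seq Rg) : (forall y, y \in s -> a y) ->
  ideal_pow a (size s) (\prod_(y <- s) y).
Proof. by move=> Hs K _ Hg; apply: Hg. Qed.

Lemma ideal_pow_ind a t (K : Rg -> Prop) : ideal K ->
  (forall s : seq Rg, size s = t -> (forall y, y \in s -> a y) -> K (\prod_(y <- s) y)) ->
  forall x, ideal_pow a t x -> K x.
Proof. by move=> HK Hg x Hx; apply: Hx. Qed.

Lemma ideal_pow_mul a s t x y : ideal_pow a s x -> ideal_pow a t y ->
  ideal_pow a (s + t) (x * y).
Proof.
move=> Hx Hy.
have HI := ideal_pow_ideal a (s + t).
pose K := fun x0 => forall y0, ideal_pow a t y0 -> ideal_pow a (s + t) (x0 * y0).
suff : K x by apply.
apply: (ideal_pow_ind _ _ Hx).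
- have [I0 ID IM] := HI; split.
  + by move=> z _; rewrite mul0r.
  + by move=> u v Hu Hv z Hz; rewrite mulrDl; apply: ID; [apply: Hu|apply: Hv].
  + by move=> r u Hu z Hz; rewrite -mulrA; apply: IM; apply: Hu.
- move=> s1 Hs1 Hin1 z Hz.
  pose K' := fun z0 => ideal_pow a (s + t) ((\prod_(y <- s1) y) * z0).
  apply: (ideal_pow_ind (K := K') _ _ Hz).
  + have [I0 ID IM] := HI; split.
    * by rewrite /K' mulr0.
    * by move=> u v Hu Hv; rewrite /K' mulrDr; apply: ID.
    * by move=> r u Hu; rewrite /K' mulrCA; apply: IM.
  + move=> s2 Hs2 Hin2; rewrite /K' -big_cat -Hs1 -Hs2 -size_cat.
    apply: ideal_pow_gen => w; rewrite mem_cat => /orP [] ?; [exact: Hin1|exact: Hin2].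
Qed.

Lemma ideal_pow_1 a x : a x -> ideal_pow a 1 x.
Proof.
move=> Hx; have := @ideal_pow_gen a [:: x]; rewrite big_seq1; apply.
by move=> y; rewrite inE => /eqP ->.
Qed.

Lemma ideal_pow_0 a x : ideal_pow a 0 x.
Proof.
have -> : x = x * \prod_(y <- [::]) y by rewrite big_nil mulr1.
have [_ _ IM] := ideal_pow_ideal a 0; apply: IM.
by apply: (@ideal_pow_gen a [::]).
Qed.

Lemma ideal_pow_X a t n x : ideal_pow a t x -> ideal_pow a (t * n) (x ^+ n).
Proof.
move=> Hx; elim: n => [|n IH]; first by rewrite muln0; apply: ideal_pow_0.
by rewrite exprS mulnS; apply: ideal_pow_mul.
Qed.

Lemma ideal_pow_le a (s t : nat) : leq s t -> incl (ideal_pow a t) (ideal_pow a s).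
Proof.
move=> Hst x Hx.
apply: (ideal_pow_ind (ideal_pow_ideal a s) _ Hx) => l Hl Hin.
have -> : l = take (t - s) l ++ drop (t - s) l by rewrite cat_take_drop.
rewrite big_cat /=.
have [_ _ IM] := ideal_pow_ideal a s; apply: IM.
have E : size (drop (t - s) l) = s by rewrite size_drop Hl subKn.
have := @ideal_pow_gen a (drop (t - s) l); rewrite E; apply.
move=> y Hy; apply: Hin; exact: mem_drop Hy.
Qed.

End Alg.


Section Alg.
Variable Rg : comNzRingType.
Local Open Scope ring_scope.
Implicit Types (a J : Rg -> Prop).

Lemma pe_lin0 (p e : nat) (phi : Rg -> Rg) : pe_linear p e phi -> phi 0 = 0.
Proof.
move=> [HD _]; have := HD 0 0; rewrite addr0 => /eqP.
by rewrite -subr_eq subrr eq_sym => /eqP.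
Qed.

Lemma Je_ideal (p e : nat) J : ideal J -> ideal (Je p e J).
Proof.
move=> [J0 JD JM]; split.
- by move=> phi Hphi; rewrite (pe_lin0 Hphi).
- by move=> x y Hx Hy phi Hphi; have [HD _] := Hphi; rewrite HD; apply: JD; [apply: Hx|apply: Hy].
- move=> r x Hx phi Hphi; pose psi := fun y => phi (r * y).
  have : pe_linear p e psi.
    have [HD HM] := Hphi; split.
    + by move=> u v; rewrite /psi mulrDr HD.
    + by move=> s u; rewrite /psi mulrCA HM.
  by move/Hx.
Qed.

Lemma Je_pow (p e N : nat) J g y : ideal J -> J (g ^+ N) ->
  Je p e J ((g ^+ N) ^+ (expn p e) * y).
Proof.
move=> [_ _ JM] HJ phi [_ HM]; rewrite HM mulrC; exact: JM.
Qed.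

Lemma Je_incl (p e : nat) J J' : incl J J' -> incl (Je p e J) (Je p e J').
Proof. by move=> H x Hx phi Hphi; apply: H; apply: Hx. Qed.

Lemma gen_by_cons (g : Rg) (gs : seq Rg) x : gen_by (g :: gs) x ->
  exists c0 y, x = c0 * g + y /\ gen_by gs y.
Proof.
move=> [c [Hc ->]]; rewrite big_ord_recl /=.
exists c`_0, (\sum_(i < size gs) c`_(bump 0 i) * gs`_i); split; first by [].
exists (behead c); split; first by rewrite size_behead Hc.
by apply: eq_bigr => i _; rewrite nth_behead.
Qed.

Lemma gen_by_nil (x : Rg) : gen_by [::] x -> x = 0.
Proof. by move=> [c [_ ->]]; rewrite big_ord0. Qed.

Lemma claim (g : Rg) (gs : seq Rg) (l : seq Rg) : (forall y, y \in l -> gen_by (g :: gs) y) ->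
  forall u v : nat, leq (u + v) (size l).+1 ->
  exists r z, \prod_(y <- l) y = g ^+ u * r + z /\ ideal_pow (gen_by gs) v z.
Proof.
elim: l => [|x l IH] Hl u v Huv.
- case: u Huv => [|u] Huv.
    exists (\prod_(y <- [::]) y), 0; split; first by rewrite expr0 mul1r addr0.
    by have [] := ideal_pow_ideal (gen_by gs) v.
  case: v Huv => [|v] Huv; last by rewrite /= in Huv; lia.
  exists 0, (\prod_(y <- [::]) y); split; first by rewrite mulr0 add0r.
  exact: ideal_pow_0.
- have Hl' : forall y, y \in l -> gen_by (g :: gs) y.
    by move=> y Hy; apply: Hl; rewrite inE Hy orbT.
  case: u Huv => [|u] Huv.
    exists (\prod_(y <- x :: l) y), 0; split; first by rewrite expr0 mul1r addr0.
    by have [] := ideal_pow_ideal (gen_by gs) v.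
  case: v Huv => [|v] Huv.
    exists 0, (\prod_(y <- x :: l) y); split; first by rewrite mulr0 add0r.
    exact: ideal_pow_0.
  have [r1 [z1 [E1 H1]]] := IH Hl' u v.+1 ltac:(simpl in Huv; lia).
  have [r2 [z2 [E2 H2]]] := IH Hl' u.+1 v ltac:(simpl in Huv; lia).
  have [c0 [y [Ex Hy]]] := gen_by_cons (Hl x (mem_head _ _)).
  have [I0 ID IM] := ideal_pow_ideal (gen_by gs) v.+1.
  exists (c0 * r1 + y * r2), (c0 * g * z1 + y * z2); split.
    rewrite big_cons Ex mulrDl {1}E1 E2 exprS; ring.
  apply: ID; first by apply: IM.
  have := ideal_pow_mul (ideal_pow_1 Hy) H2; by rewrite add1n.
Qed.

Lemma bound_gens (p e N : nat) J (gs : seq Rg) : ideal J ->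
  (forall g, g \in gs -> J (g ^+ N)) ->
  forall n : nat, leq (size gs * (N * expn p e)).+1 n ->
  incl (ideal_pow (gen_by gs) n) (Je p e J).
Proof.
move=> HJ; have HJe := Je_ideal p e HJ; have [Je0 JeD JeM] := HJe.
elim: gs => [|g gs IH] Hgs n Hn x Hx.
- apply: (ideal_pow_ind HJe _ Hx) => l Hl Hin.
  case: l Hl Hin => [|y l] Hl Hin; first by rewrite /= in Hl; lia.
  rewrite big_cons (gen_by_nil (Hin y (mem_head _ _))) mul0r; exact: Je0.
- apply: (ideal_pow_ind HJe _ Hx) => l Hl Hin.
  have Hgs' : forall g, g \in gs -> J (g ^+ N).
    by move=> h Hh; apply: Hgs; rewrite inE Hh orbT.
  have [r [z [E Hz]]] := claim Hin (u := N * expn p e) (v := subn n.+1 (muln N (expn p e)))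
     ltac:(rewrite Hl /= in Hn *; lia).
  rewrite E; apply: JeD.
    rewrite exprM; apply: Je_pow => //; apply: Hgs; exact: mem_head.
  have H := IH Hgs' (subn n.+1 (muln N (expn p e))); rewrite /incl in H; apply: H Hz.
  rewrite -Hl /= in Hn *; lia.
Qed.

Lemma gen_by_mem (gs : seq Rg) g : g \in gs -> gen_by gs g.
Proof.
move=> Hg; pose i := index g gs.
have Hi : leq i.+1 (size gs) by rewrite /i index_mem.
exists ([seq (j == i)%:R | j <- iota 0 (size gs)] : seq Rg); split.
  by rewrite size_map size_iota.
rewrite (bigD1 (Ordinal Hi)) //= big1.
  by rewrite (nth_map 0%nat) ?size_iota // nth_iota // add0n eqxx mul1r nth_index // addr0.
move=> j Hj; rewrite (nth_map 0%nat) ?size_iota // nth_iota // add0n.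
have -> : (nat_of_ord j == i) = false.
  by apply/negbTE; apply: contra Hj => /eqP Hj; apply/eqP; apply: val_inj.
by rewrite mul0r.
Qed.

Lemma ideal_pow_mono a b t : incl a b -> incl (ideal_pow a t) (ideal_pow b t).
Proof.
move=> Hab x Hx; apply: (ideal_pow_ind (ideal_pow_ideal b t) _ Hx) => l Hl Hin.
rewrite -Hl; apply: ideal_pow_gen => y Hy; apply: Hab; exact: Hin.
Qed.

Lemma common_N J (gs : seq Rg) : ideal J -> (forall g, g \in gs -> radical J g) ->
  exists N : nat, forall g, g \in gs -> J (g ^+ N).
Proof.
move=> [_ _ JM]; elim: gs => [|g gs IH] H; first by exists 0%nat.
have [N HN] := IH (fun h Hh => H h ltac:(by rewrite inE Hh orbT)).
have [n0 Hn0] := H g (mem_head _ _).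
exists (addn n0 N) => h; rewrite inE => /orP [/eqP ->|Hh].
  by rewrite exprD mulrC; apply: JM.
by rewrite exprD; apply: JM; apply: HN.
Qed.

Lemma bound_main (p : nat) J a : noetherian Rg -> ideal J -> ideal a ->
  incl a (radical J) ->
  exists C : nat, forall e n : nat, leq (C * expn p e).+1 n ->
    incl (ideal_pow a n) (Je p e J).
Proof.
move=> HN HJ Ha Hrad.
have [gs Hgs] := HN a Ha.
have [N HNg] := common_N HJ (gs := gs) (fun g Hg => Hrad g ((proj2 (Hgs g)) (gen_by_mem Hg))).
exists (muln (size gs) N) => e n Hn x Hx.
apply: (bound_gens HJ HNg (n := n)); first by rewrite mulnA.
apply: (ideal_pow_mono (a := a)) => // y Hy; exact: (proj1 (Hgs y)).
Qed.
End Alg.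


Section Mod.
Variable Rg : comNzRingType.
Local Open Scope ring_scope.

Definition submod n (M : 'rV[Rg]_n -> Prop) :=
  [/\ M 0, (forall u v, M u -> M v -> M (u + v)) & (forall r u, M u -> M (r *: u))].

Lemma submod_comb n m (M : 'rV[Rg]_n -> Prop) (G : 'M_(m, n)) (w : 'rV_m) :
  submod M -> (forall i, M (row i G)) -> M (w *m G).
Proof.
move=> [M0 MD MZ] HG; rewrite mulmx_sum_row.
by apply: (big_ind M) => // i _; apply: MZ.
Qed.

Lemma gen_by_row (gs : seq Rg) x : gen_by gs x ->
  exists c : 'rV[Rg]_(size gs), x = \sum_j c 0 j * gs`_j.
Proof.
move=> [c [_ ->]]; exists (\row_j c`_j).
by apply: eq_bigr => j _; rewrite mxE.
Qed.

Lemma submod_fg (HN : noetherian Rg) n (M : 'rV[Rg]_n -> Prop) : submod M ->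
  exists m (G : 'M[Rg]_(m, n)), (forall i, M (row i G)) /\
    forall v, M v -> exists w : 'rV_m, v = w *m G.
Proof.
elim: n M => [|n IH] M HM.
  exists 0%nat, 0; split; first by move=> i; case: i.
  move=> v _; exists 0; rewrite mul0mx; exact: thinmx0.
have [M0 MD MZ] := HM.
suff : forall M : 'rV[Rg]_(1 + n) -> Prop, submod M ->
  exists m (G : 'M[Rg]_(m, 1 + n)), (forall i, M (row i G)) /\
    forall v, M v -> exists w : 'rV_m, v = w *m G by apply.
clear M0 MD MZ HM; move=> {}M HM; have [M0 MD MZ] := HM.
pose fst (v : 'rV[Rg]_(1 + n)) := v 0 (lshift n ord0).
pose L := fun x => exists v, M v /\ x = fst v.
have HL : ideal L.
  split.
  - by exists 0; split => //; rewrite /fst mxE.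
  - move=> x y [u [Hu ->]] [v [Hv ->]]; exists (u + v); split; first exact: MD.
    by rewrite /fst mxE.
  - move=> r x [u [Hu ->]]; exists (r *: u); split; first exact: MZ.
    by rewrite /fst mxE.
have [gs Hgs] := HN L HL.
have : forall j : 'I_(size gs), exists v, M v /\ gs`_j = fst v.
  move=> j; apply: (proj2 (Hgs _)); apply: gen_by_mem; exact: mem_nth.
case/fin_all_exists => f Hf.
pose V := \matrix_(j < size gs) f j.
have HV : forall j, row j V = f j by move=> j; rewrite rowK.
pose M' := fun w : 'rV[Rg]_n => M (row_mx 0 w).
have HM' : submod M'.
  split.
  - by rewrite /M' row_mx0.
  - move=> u v Hu Hv; rewrite /M'.
    have -> : row_mx 0 (u + v) = row_mx 0 u + row_mx 0 v :> 'rV_(1 + n) by rewrite add_row_mx addr0.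
    exact: MD.
  - move=> r u Hu; rewrite /M'.
    have -> : row_mx 0 (r *: u) = r *: row_mx 0 u :> 'rV_(1 + n) by rewrite scale_row_mx scaler0.
    exact: MZ.
have [m2 [W [HW1 HW2]]] := IH M' HM'.
exists (size gs + m2)%nat, (col_mx V (row_mx 0 W)); split.
  move=> i; case: (splitP i) => j Hij.
    have -> : i = lshift m2 j by apply: val_inj.
    by rewrite rowKu HV; have [] := Hf j.
  have -> : i = rshift (size gs) j by apply: val_inj.
  by rewrite rowKd row_row_mx row0; apply: HW1.
have HVr : forall j, M (row j V) by move=> j; rewrite HV; have [] := Hf j.
move=> v Hv.
have [c Hc] := gen_by_row ((proj1 (Hgs (fst v))) (ex_intro _ v (conj Hv erefl))).
pose u := v - c *m V.
have Hu : M u.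
  apply: MD => //; rewrite -scaleN1r; apply: MZ; exact: submod_comb.
have Hu0 : fst u = 0.
  rewrite /fst in Hc; rewrite /u /fst !mxE Hc; apply/eqP; rewrite subr_eq0; apply/eqP; apply: eq_bigr => j _.
  by rewrite !mxE (proj2 (Hf j)).
have Eu : u = row_mx 0 (rsubmx u).
  rewrite -{1}(hsubmxK u); congr row_mx; apply/matrixP => a b.
  rewrite !mxE (ord1 a) (ord1 b); move: Hu0; rewrite /fst /u !mxE; apply.
have [w2 Hw2] := HW2 (rsubmx u) ltac:(by rewrite /M' -Eu).
exists (row_mx c w2); rewrite mul_row_col mul_mx_row mulmx0 -Hw2 -Eu /u.
by rewrite addrC subrK.
Qed.
End Mod.


Section Split.
Variable Rg : comNzRingType.
Variable p : nat.
Hypothesis Hpr : prime p.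
Hypothesis Hp : p \in GRing.pchar Rg.
Local Open Scope ring_scope.

Lemma frobD (x y : Rg) : (x + y) ^+ p = x ^+ p + y ^+ p.
Proof. exact: (pFrobenius_autD_comm Hp (mulrC x y)). Qed.

Lemma frob0 : (0 : Rg) ^+ p = 0.
Proof. by rewrite expr0n; case: p Hpr. Qed.

Lemma frobN (x : Rg) : (- x) ^+ p = - x ^+ p.
Proof.
apply/eqP; rewrite -subr_eq0 opprK -frobD addNr frob0 //.
Qed.

Lemma frob_sum (I : finType) (F : I -> Rg) : (\sum_i F i) ^+ p = \sum_i (F i) ^+ p.
Proof. exact: (big_morph (fun x => x ^+ p) frobD frob0). Qed.

Lemma splitting : noetherian Rg -> Ffinite Rg p -> Fpure Rg p ->
  exists sigma : Rg -> Rg, (forall x y, sigma (x + y) = sigma x + sigma y) /\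
    (forall r x, sigma (r ^+ p * x) = r * sigma x) /\ sigma 1 = 1.
Proof.
move=> HN [sl Hsl] [Hinj Hpure].
pose k := size sl.
pose rep (c : 'rV[Rg]_k) (z : Rg) := z = \sum_j (c 0 j) ^+ p * sl`_j.
have Hcf : forall z, exists c, rep c z.
  move=> z; have [c [_ Hc]] := Hsl z; exists (\row_j c`_j).
  by rewrite /rep Hc; apply: eq_bigr => j _; rewrite mxE.
pose cf := fun z => proj1_sig (constructive_indefinite_description _ (Hcf z)).
have Hcfr : forall z, rep (cf z) z.
  by move=> z; rewrite /cf; case: constructive_indefinite_description.
pose K := fun c : 'rV[Rg]_k => \sum_j (c 0 j) ^+ p * sl`_j = 0.
have HK : submod K.
  split.
  - by rewrite /K big1 // => j _; rewrite mxE frob0 mul0r.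
  - move=> u v Hu Hv; rewrite /K; under eq_bigr do rewrite mxE frobD mulrDl.
    by rewrite big_split /= Hu Hv addr0.
  - move=> r u Hu; rewrite /K; under eq_bigr do rewrite mxE exprMn -mulrA.
    by rewrite -mulr_sumr Hu mulr0.
have [m [G [HG1 HG2]]] := submod_fg HN HK.
pose A := col_mx G (cf 1).
pose b := col_mx (0 : 'cV[Rg]_m) (const_mx 1 : 'cV[Rg]_1).
pose y := \col_(j < k) sl`_j.
have Hy : map_mx (fun r => r ^+ p) A *m y = map_mx (fun r => r ^+ p) b.
  rewrite /A /b !map_col_mx mul_col_mx; congr col_mx.
    apply/matrixP => i l; rewrite !mxE frob0 -[RHS](HG1 i).
    by apply: eq_bigr => j _; rewrite !mxE.
  apply/matrixP => i l; rewrite !mxE expr1n (ord1 i) [RHS](Hcfr 1).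
  by apply: eq_bigr => j _; rewrite !mxE.
have [x Hx] := Hpure _ _ A b (ex_intro _ y Hy).
have HAx : A *m x = b.
  apply/matrixP => i l; apply: Hinj; move/matrixP: Hx => /(_ i l).
  by rewrite !mxE frob_sum => <-; apply: eq_bigr => j _; rewrite !mxE exprMn.
have HGx : G *m x = 0.
  have := congr1 usubmx HAx; by rewrite /A /b mul_col_mx !col_mxKu.
have Hdx : cf 1 *m x = const_mx 1.
  have := congr1 dsubmx HAx; by rewrite /A /b mul_col_mx !col_mxKd.
pose lin := fun c : 'rV[Rg]_k => (c *m x) 0 0.
have Hwd : forall c c' z, rep c z -> rep c' z -> lin c = lin c'.
  move=> c c' z Hc Hc'.
  have : K (c - c').
    rewrite /K; under eq_bigr do rewrite !mxE frobD frobN mulrDl mulNr.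
    by rewrite big_split /= sumrN -Hc -Hc' subrr.
  move/HG2 => [w Hw]; apply/eqP; rewrite -subr_eq0; apply/eqP.
  rewrite /lin.
  have -> : (c *m x) 0 0 - (c' *m x) 0 0 = ((c - c') *m x) 0 0 by rewrite mulmxBl !mxE.
  by rewrite Hw -mulmxA HGx mulmx0 mxE.
exists (fun z => lin (cf z)); split; last split.
- move=> u v; rewrite (Hwd (cf (u + v)) (cf u + cf v) (u + v)) //.
    by rewrite /lin mulmxDl mxE.
  rewrite /rep; under eq_bigr do rewrite mxE frobD mulrDl.
  by rewrite big_split -!Hcfr.
- move=> r u; rewrite (Hwd (cf (r ^+ p * u)) (r *: cf u) (r ^+ p * u)) //.
    by rewrite /lin -scalemxAl mxE.
  rewrite /rep; under eq_bigr do rewrite mxE exprMn -mulrA.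
  by rewrite -mulr_sumr -Hcfr.
- by rewrite /lin Hdx mxE.
Qed.
End Split.


Lemma max_exists (P : nat -> Prop) (B : nat) : (exists t, P t) ->
  (forall t, P t -> leq t B) -> exists m, P m /\ forall t, P t -> leq t m.
Proof.
elim: B => [|B IH] Hex Hb.
  have [t Ht] := Hex; exists t; split => // t' Ht'.
  by have := Hb t' Ht'; have := Hb t Ht; lia.
case: (classic (P B.+1)) => HB.
  by exists B.+1; split.
apply: IH => // t Ht; have := Hb t Ht.
case: (t =P B.+1) => [E|]; first by rewrite E in Ht.
lia.
Qed.

Section Bnum.
Variable Rg : comNzRingType.
Variable p : nat.
Local Open Scope ring_scope.

Definition Sset (e : nat) (J a : Rg -> Prop) (t : nat) :=
  ~ incl (ideal_pow a t) (Je p e J).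

Lemma bnum_spec e J a (B : nat) : (forall t, Sset e J a t -> leq t B) ->
  (Sset e J a (bnum p e J a) /\ forall t, Sset e J a t -> leq t (bnum p e J a)) \/
  ((forall t, ~ Sset e J a t) /\ bnum p e J a = 0%nat).
Proof.
move=> HB.
have Hsp := @epsilon_spec nat (inhabits 0%nat)
   (fun t => is_bmax p e J a t \/ (~ (exists m, is_bmax p e J a m) /\ t = 0%nat)).
rewrite /bnum; case: (classic (exists t, Sset e J a t)) => Hex.
- have [m [Hm1 Hm2]] := max_exists Hex HB.
  left; case: Hsp.
  + by exists m; left; split.
  + by move=> [H1 H2]; split.
  + move=> [H _]; exfalso; apply: H; exists m; split => //.
- right; case: Hsp.
  + exists 0%nat; right; split => //; move=> [m [Hm _]]; apply: Hex; by exists m.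
  + move=> [H _]; exfalso; apply: Hex; by exists (epsilon (inhabits 0%nat)
   (fun t => is_bmax p e J a t \/ (~ (exists m, is_bmax p e J a m) /\ t = 0%nat))).
  + move=> [_ ->]; split => // t Ht; apply: Hex; by exists t.
Qed.

Lemma S_mono (sigma : Rg -> Rg) e J a t :
  (forall x y, sigma (x + y) = sigma x + sigma y) ->
  (forall r x, sigma (r ^+ p * x) = r * sigma x) -> sigma 1 = 1 ->
  Sset e J a t -> Sset e.+1 J a (muln t p).
Proof.
move=> HsD HsM Hs1 HS Hinc; apply: HS => f Hf phi [HD HM].
pose psi := fun x => phi (sigma x).
have Hpsi : pe_linear p e.+1 psi.
  split.
  - by move=> x y; rewrite /psi HsD HD.
  - by move=> r x; rewrite /psi expnSr exprM HsM HM.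
have := Hinc _ (@ideal_pow_X _ a t p f Hf) psi Hpsi.
by rewrite /psi -[f ^+ p]mulr1 HsM Hs1 mulr1.
Qed.

Lemma bnum_mono (sigma : Rg -> Rg) e J a (B1 B2 : nat) :
  (forall x y, sigma (x + y) = sigma x + sigma y) ->
  (forall r x, sigma (r ^+ p * x) = r * sigma x) -> sigma 1 = 1 ->
  (forall t, Sset e J a t -> leq t B1) ->
  (forall t, Sset e.+1 J a t -> leq t B2) ->
  leq (muln p (bnum p e J a)) (bnum p e.+1 J a).
Proof.
move=> HsD HsM Hs1 HB1 HB2.
case: (bnum_spec HB1) => [[H1 _]|[_ ->]]; last by rewrite muln0.
have H := S_mono HsD HsM Hs1 H1.
case: (bnum_spec HB2) => [[_ H2]|[H2 _]]; last by case: (H2 _ H).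
by rewrite mulnC; apply: H2.
Qed.

End Bnum.

Local Open Scope ring_scope.

Lemma ct_props (Rg : comNzRingType) (p C : nat) (J a : Rg -> Prop) (sigma : Rg -> Rg) :
  prime p ->
  (forall x y, sigma (x + y) = sigma x + sigma y) ->
  (forall r x, sigma (r ^+ p * x) = r * sigma x) -> sigma 1 = 1 ->
  (forall e t, Sset p e J a t -> leq t (muln C (expn p e))) ->
  Un_cv (fun e => Rdiv (INR (bnum p e J a)) (INR (expn p e))) (ct p J a) /\
  forall e, Rle (Rdiv (INR (bnum p e J a)) (INR (expn p e))) (ct p J a).
Proof.
move=> Hpr HsD HsM Hs1 HB.
have bnd : forall e, leq (bnum p e J a) (muln C (expn p e)).
  by move=> e; case: (bnum_spec (HB e)) => [[H1 _]|[_ ->]] //; apply: HB.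
have mono : forall e, leq (muln p (bnum p e J a)) (bnum p e.+1 J a).
  by move=> e; apply: (bnum_mono HsD HsM Hs1 (HB e) (HB e.+1)).
have [Hg [Hub _]] := seq_props (fun e => bnum p e J a) p C (prime_gt0 Hpr) mono bnd.
have [l Hl] := growing_cv _ Hg Hub.
have Hct : Un_cv (fun e => Rdiv (INR (bnum p e J a)) (INR (expn p e))) (ct p J a).
  exact: (epsilon_spec (inhabits R0) _ (ex_intro _ l Hl)).
split => //; exact: growing_ineq Hg Hct.
Qed.

Arguments ct_props [Rg p C J a sigma].

Local Close Scope ring_scope.
Unset Implicit Arguments.

Theorem mainTheorem13 (Rg : comNzRingType) (p : nat) (I : Type)
  (q : I -> Rg -> Prop) (a : Rg -> Prop) :
  prime p -> p \in GRing.pchar Rg ->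
  noetherian Rg -> Ffinite Rg p -> Fpure Rg p ->
  inhabited I ->
  (forall i, ideal (q i)) -> ideal a ->
  incl a (radical (bigcap q)) ->
  is_lub (fun x => exists i, x = ct p (q i) a) (ct p (bigcap q) a).
Proof.
move=> Hpr Hp HN HF HP [i0] Hq Ha Hrad.
have [sigma [HsD [HsM Hs1]]] := splitting Hpr Hp HN HF HP.
have HJb : ideal (bigcap q).
  split.
  - by move=> i; have [] := Hq i.
  - by move=> x y Hx Hy i; have [_ D _] := Hq i; apply: D.
  - by move=> r x Hx i; have [_ _ M] := Hq i; apply: M.
have [C HC] := bound_main p HN HJb Ha Hrad.
have BJ : forall e t, Sset p e (bigcap q) a t -> leq t (muln C (expn p e)).
  move=> e t HS; rewrite leqNgt; apply/negP => Hlt; apply: HS; exact: HC e t Hlt.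
have Sqi : forall i e t, Sset p e (q i) a t -> Sset p e (bigcap q) a t.
  move=> i e t HS Hinc; apply: HS => x Hx.
  apply: (Je_incl (J := bigcap q)); last exact: Hinc.
  by move=> y Hy; exact: Hy i.
have Bq : forall i e t, Sset p e (q i) a t -> leq t (muln C (expn p e)).
  by move=> i e t H; apply: BJ; apply: (Sqi i).
have SJq : forall e t, Sset p e (bigcap q) a t -> exists i, Sset p e (q i) a t.
  move=> e t HS; apply: not_all_not_ex => Hall; apply: HS => f Hf phi Hphi i.
  have := Hall i; move/NNPP => H; exact: H f Hf phi Hphi.
have [cJ1 cJ2] := ct_props Hpr HsD HsM Hs1 BJ.
have Hpos : forall e, Rlt R0 (INR (expn p e)).
  move=> e; apply: lt_0_INR; apply/ltP; by rewrite expn_gt0 prime_gt0.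
have le_u : forall (m n : nat) e, leq m n ->
    Rle (Rdiv (INR m) (INR (expn p e))) (Rdiv (INR n) (INR (expn p e))).
  move=> m n e Hmn; unfold Rdiv; apply: Rmult_le_compat_r.
    by left; apply: Rinv_0_lt_compat.
  by apply: le_INR; apply/leP.
split.
- move=> x [i ->].
  have [ci1 ci2] := ct_props Hpr HsD HsM Hs1 (Bq i).
  apply: (Rle_cv_lim _ ci1 cJ1) => e; apply: le_u.
  case: (bnum_spec (Bq i e)) => [[H1 _]|[_ ->]] //.
  case: (bnum_spec (BJ e)) => [[_ H2]|[H2 _]]; first by apply: H2; apply: (Sqi i).
  by case: (H2 _ (Sqi i e _ H1)).
- move=> M HM.
  have cM : Un_cv (fun _ : nat => M) M.
    move=> eps Heps; exists 0%nat => n _; rewrite R_dist_eq; exact: Heps.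
  apply: (Rle_cv_lim _ cJ1 cM) => e.
  case: (bnum_spec (BJ e)) => [[H1 _]|[_ ->]].
  + have [i Hi] := SJq e _ H1.
    have [ci1 ci2] := ct_props Hpr HsD HsM Hs1 (Bq i).
    apply: Rle_trans (HM _ (ex_intro _ i erefl)).
    apply: Rle_trans (ci2 e); apply: le_u.
    case: (bnum_spec (Bq i e)) => [[_ H2]|[H2 _]]; first by apply: H2.
    by case: (H2 _ Hi).
  + have [ci1 ci2] := ct_props Hpr HsD HsM Hs1 (Bq i0).
    apply: Rle_trans (HM _ (ex_intro _ i0 erefl)).
    apply: Rle_trans (ci2 e); apply: le_u; done.
Qed.
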